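(* Let $\varepsilon>0$, $\bar\theta,\bar\varphi\in\mathbb{R}$, and let $P_1,P_2,P_3\in\mathbb{R}^3$ with $\|P_i\|\le1$ be $\varepsilon$-spanning for $(\bar\theta,\bar\varphi)$. Let $\theta,\varphi\in\mathbb{R}$ with $|\theta-\bar\theta|,|\varphi-\bar\varphi|\le\varepsilon$, and assume $\langle X(\theta,\varphi),P_i\rangle>0$ for $i=1,2,3$. Then $X(\theta,\varphi)\in\operatorname{span}^+(P_1,P_2,P_3)$.
   Context: $R(\alpha)=\begin{pmatrix}\cos\alpha&-\sin\alpha\\ \sin\alpha&\cos\alpha\end{pmatrix}$; $X(\theta,\varphi)=(\cos\theta\sin\varphi,\sin\theta\sin\varphi,\cos\varphi)^t$; $M(\theta,\varphi)=\begin{pmatrix}-\sin\theta&\cos\theta&0\\ -\cos\theta\cos\varphi&-\sin\theta\cos\varphi&\sin\varphi\end{pmatrix}$. For $M=M(\bar\theta,\bar\varphi)$, points $P_1,P_2,P_3$ of norm $\le1$ are $\varepsilon$-spanning for $(\bar\theta,\bar\varphi)$ if $\langle R(\pi/2)MP_1,MP_2\rangle$, $\langle R(\pi/2)MP_2,MP_3\rangle$, $\langle R(\pi/2)MP_3,MP_1\rangle$ are all $>2\varepsilon(\sqrt2+\varepsilon)$. $\operatorname{span}^+(P_1,P_2,P_3)=\{\sum\lambda_iP_i:\lambda_i>0\}$. *)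

(* Defs.v *)
From Stdlib Require Import Reals.
Open Scope R_scope.

Definition vec3 := (R * R * R)%type.
Definition vec2 := (R * R)%type.

Definition v3x (v : vec3) : R := fst (fst v).
Definition v3y (v : vec3) : R := snd (fst v).
Definition v3z (v : vec3) : R := snd v.

Definition dot3 (u v : vec3) : R := v3x u * v3x v + v3y u * v3y v + v3z u * v3z v.
Definition dot2 (u v : vec2) : R := fst u * fst v + snd u * snd v.

Definition norm3 (v : vec3) : R := sqrt (dot3 v v).

Definition rot (a : R) (u : vec2) : vec2 :=
  (cos a * fst u - sin a * snd u, sin a * fst u + cos a * snd u).

Definition Xsph (th ph : R) : vec3 := (cos th * sin ph, sin th * sin ph, cos ph).

Definition Mapp (th ph : R) (P : vec3) : vec2 :=
  (- sin th * v3x P + cos th * v3y P,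
   - cos th * cos ph * v3x P - sin th * cos ph * v3y P + sin ph * v3z P).

Definition eps_spanning (eps thb phb : R) (P1 P2 P3 : vec3) : Prop :=
  let M := Mapp thb phb in
  norm3 P1 <= 1 /\ norm3 P2 <= 1 /\ norm3 P3 <= 1 /\
  dot2 (rot (PI / 2) (M P1)) (M P2) > 2 * eps * (sqrt 2 + eps) /\
  dot2 (rot (PI / 2) (M P2)) (M P3) > 2 * eps * (sqrt 2 + eps) /\
  dot2 (rot (PI / 2) (M P3)) (M P1) > 2 * eps * (sqrt 2 + eps).

Definition span_pos (P1 P2 P3 : vec3) (X : vec3) : Prop :=
  exists l1 l2 l3 : R, l1 > 0 /\ l2 > 0 /\ l3 > 0 /\
    v3x X = l1 * v3x P1 + l2 * v3x P2 + l3 * v3x P3 /\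
    v3y X = l1 * v3y P1 + l2 * v3y P2 + l3 * v3y P3 /\
    v3z X = l1 * v3z P1 + l2 * v3z P2 + l3 * v3z P3.

(* Main.v *)
Require Import Defs.
From Stdlib Require Import Reals Lra Psatz.
Open Scope R_scope.

Lemma sin_sq_le_pos x : 0 < x -> sin x * sin x <= x * x.
Proof.
  intros Hx. pose proof (sin2_cos2 x) as H. unfold Rsqr in H.
  pose proof (sin_lt_x x Hx).
  destruct (Rle_lt_dec 1 x).
  - nra.
  - assert (0 < sin x) by (apply sin_gt_0; pose proof PI2_1; lra). nra.
Qed.

Lemma sin_sq_le x : sin x * sin x <= x * x.
Proof.
  destruct (Rtotal_order x 0) as [H|[H|H]].
  - pose proof (sin_sq_le_pos (-x) ltac:(lra)). rewrite sin_neg in H0. nra.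
  - subst. rewrite sin_0. lra.
  - now apply sin_sq_le_pos.
Qed.

Lemma one_minus_cos t : 2 - 2 * cos t <= t * t.
Proof.
  replace t with (2 * (t/2)) at 1 by field. rewrite cos_2a_sin.
  pose proof (sin_sq_le (t/2)). nra.
Qed.

Definition cross (P Q : vec3) : vec3 :=
  (v3y P * v3z Q - v3z P * v3y Q, v3z P * v3x Q - v3x P * v3z Q,
   v3x P * v3y Q - v3y P * v3x Q).

Lemma dot_nonneg P : 0 <= dot3 P P.
Proof. destruct P as [[a b] c]; unfold dot3, v3x, v3y, v3z; simpl; nra. Qed.

Lemma norm_le P : norm3 P <= 1 -> dot3 P P <= 1.
Proof.
  unfold norm3; intros H. pose proof (sqrt_sqrt _ (dot_nonneg P)).
  pose proof (sqrt_pos (dot3 P P)). nra.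
Qed.

Lemma lagrange P Q : dot3 (cross P Q) (cross P Q) = dot3 P P * dot3 Q Q - dot3 P Q * dot3 P Q.
Proof. destruct P as [[a b] c]; destruct Q as [[d e] f]; unfold cross, dot3, v3x, v3y, v3z; simpl; ring. Qed.

Lemma cs_bound A w d : dot3 A A <= d * d -> dot3 w w <= 1 -> Rabs (dot3 A w) <= Rabs d.
Proof.
  intros H1 H2. pose proof (lagrange A w). pose proof (dot_nonneg (cross A w)).
  pose proof (dot_nonneg A). pose proof (dot_nonneg w).
  apply Rsqr_le_abs_0. unfold Rsqr. nra.
Qed.

Lemma det_eq th ph P Q :
  dot2 (rot (PI / 2) (Mapp th ph P)) (Mapp th ph Q) = dot3 (Xsph th ph) (cross P Q).
Proof.
  unfold rot; rewrite cos_PI2, sin_PI2.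
  pose proof (sin2_cos2 th) as H. unfold Rsqr in H.
  destruct P as [[a b] c]; destruct Q as [[d e] f];
  unfold dot2, dot3, Mapp, Xsph, cross, v3x, v3y, v3z; simpl.
  transitivity ((cos th * sin ph) * (b * f - c * e) + (sin th * sin ph) * (c * d - a * f)
     + cos ph * (a * e - b * d) + cos ph * (sin th * sin th + cos th * cos th - 1) * (a*e - b*d)).
  - ring.
  - rewrite H. ring.
Qed.

Lemma Xdiff th ph thb phb w : dot3 w w <= 1 ->
  Rabs (dot3 (Xsph th ph) w - dot3 (Xsph thb phb) w) <= Rabs (th - thb) + Rabs (ph - phb).
Proof.
  intros Hw.
  set (A := (cos th * sin ph - cos thb * sin ph, sin th * sin ph - sin thb * sin ph, 0) : vec3).
  set (B := (cos thb * sin ph - cos thb * sin phb, sin thb * sin ph - sin thb * sin phb, cos ph - cos phb) : vec3).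
  assert (E : dot3 (Xsph th ph) w - dot3 (Xsph thb phb) w = dot3 A w + dot3 B w).
  { destruct w as [[a b] c]; unfold A, B, dot3, Xsph, v3x, v3y, v3z; simpl; ring. }
  rewrite E. eapply Rle_trans; [apply Rabs_triang|]. apply Rplus_le_compat; apply cs_bound; auto.
  - unfold A, dot3, v3x, v3y, v3z; simpl.
    pose proof (one_minus_cos (th - thb)). rewrite cos_minus in H.
    pose proof (sin2_cos2 th). pose proof (sin2_cos2 thb). pose proof (sin2_cos2 ph).
    unfold Rsqr in *. 
    assert (0 <= sin ph * sin ph <= 1) by nra.
    transitivity (sin ph * sin ph * (2 - 2 * (cos th * cos thb + sin th * sin thb))).
    + right. nra.
    + assert (0 <= 2 - 2 * (cos th * cos thb + sin th * sin thb)).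
      { replace (2 - 2 * (cos th * cos thb + sin th * sin thb)) with ((cos th - cos thb)*(cos th - cos thb) + (sin th - sin thb)*(sin th - sin thb)) by (assert (Eq : (cos th - cos thb)*(cos th - cos thb) + (sin th - sin thb)*(sin th - sin thb) = (sin th * sin th + cos th * cos th) + (sin thb * sin thb + cos thb * cos thb) - 2 * (cos th * cos thb + sin th * sin thb)) by ring; rewrite Eq, H0, H1; ring). pose proof (Rle_0_sqr (cos th - cos thb)); pose proof (Rle_0_sqr (sin th - sin thb)); unfold Rsqr in *; lra. }
      nra.
  - unfold B, dot3, v3x, v3y, v3z; simpl.
    pose proof (one_minus_cos (ph - phb)). rewrite cos_minus in H.
    pose proof (sin2_cos2 thb). pose proof (sin2_cos2 ph). pose proof (sin2_cos2 phb).
    unfold Rsqr in *.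
    transitivity (2 - 2 * (cos ph * cos phb + sin ph * sin phb)); [right| exact H].
    transitivity ((sin thb * sin thb + cos thb * cos thb) * ((sin ph - sin phb) * (sin ph - sin phb)) + (cos ph - cos phb) * (cos ph - cos phb)); [ring|].
    rewrite H0.
    transitivity ((sin ph * sin ph + cos ph * cos ph) + (sin phb * sin phb + cos phb * cos phb) - 2 * (cos ph * cos phb + sin ph * sin phb)); [ring|].
    rewrite H1, H2. ring.
Qed.

Lemma alg (x y z : R) (P1 P2 P3 : vec3) :
  x*x + y*y + z*z = 1 ->
  dot3 (x,y,z) P1 > 0 -> dot3 (x,y,z) P2 > 0 -> dot3 (x,y,z) P3 > 0 ->
  dot3 (x,y,z) (cross P1 P2) > 0 -> dot3 (x,y,z) (cross P2 P3) > 0 ->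
  dot3 (x,y,z) (cross P3 P1) > 0 ->
  span_pos P1 P2 P3 (x,y,z).
Proof.
  destruct P1 as [[a1 b1] c1]; destruct P2 as [[a2 b2] c2]; destruct P3 as [[a3 b3] c3].
  unfold dot3, cross, span_pos, v3x, v3y, v3z; simpl.
  intros Hn H1 H2 H3 H12 H23 H31.
  set (D := a1 * (b2 * c3 - c2 * b3) + b1 * (c2 * a3 - a2 * c3) + c1 * (a2 * b3 - b2 * a3)).
  set (k1 := x * (b2 * c3 - c2 * b3) + y * (c2 * a3 - a2 * c3) + z * (a2 * b3 - b2 * a3)) in *.
  set (k2 := x * (b3 * c1 - c3 * b1) + y * (c3 * a1 - a3 * c1) + z * (a3 * b1 - b3 * a1)) in *.
  set (k3 := x * (b1 * c2 - c1 * b2) + y * (c1 * a2 - a1 * c2) + z * (a1 * b2 - b1 * a2)) in *.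
  assert (Ex : D * x = k1 * a1 + k2 * a2 + k3 * a3) by (unfold D, k1, k2, k3; ring).
  assert (Ey : D * y = k1 * b1 + k2 * b2 + k3 * b3) by (unfold D, k1, k2, k3; ring).
  assert (Ez : D * z = k1 * c1 + k2 * c2 + k3 * c3) by (unfold D, k1, k2, k3; ring).
  assert (HD : D = k1 * (x*a1+y*b1+z*c1) + k2 * (x*a2+y*b2+z*c2) + k3 * (x*a3+y*b3+z*c3)).
  { transitivity (D * (x*x+y*y+z*z)); [rewrite Hn; ring|].
    replace (D * (x*x+y*y+z*z)) with ((D*x)*x + (D*y)*y + (D*z)*z) by ring.
    rewrite Ex, Ey, Ez. ring. }
  assert (Dpos : D > 0).
  { rewrite HD. assert (0 < k1 * (x*a1+y*b1+z*c1)) by (apply Rmult_lt_0_compat; lra).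
    assert (0 < k2 * (x*a2+y*b2+z*c2)) by (apply Rmult_lt_0_compat; lra).
    assert (0 < k3 * (x*a3+y*b3+z*c3)) by (apply Rmult_lt_0_compat; lra). lra. }
  exists (k1 / D), (k2 / D), (k3 / D).
  repeat split.
  - apply Rdiv_lt_0_compat; lra.
  - apply Rdiv_lt_0_compat; lra.
  - apply Rdiv_lt_0_compat; lra.
  - apply (Rmult_eq_reg_l D); [|lra]. rewrite Ex. field. lra.
  - apply (Rmult_eq_reg_l D); [|lra]. rewrite Ey. field. lra.
  - apply (Rmult_eq_reg_l D); [|lra]. rewrite Ez. field. lra.
Qed.

Theorem lemma5p8 (eps thb phb th ph : R) (P1 P2 P3 : vec3) :
  eps > 0 ->
  norm3 P1 <= 1 -> norm3 P2 <= 1 -> norm3 P3 <= 1 ->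
  eps_spanning eps thb phb P1 P2 P3 ->
  Rabs (th - thb) <= eps -> Rabs (ph - phb) <= eps ->
  dot3 (Xsph th ph) P1 > 0 -> dot3 (Xsph th ph) P2 > 0 -> dot3 (Xsph th ph) P3 > 0 ->
  span_pos P1 P2 P3 (Xsph th ph).
Proof.
  intros He N1 N2 N3 [_ [_ [_ [S12 [S23 S31]]]]] Hth Hph H1 H2 H3.
  rewrite !det_eq in S12, S23, S31.
  assert (s2 : 1 <= sqrt 2).
  { pose proof (sqrt_sqrt 2 ltac:(lra)). pose proof (sqrt_pos 2). nra. }
  assert (Hb : 2 * eps * (sqrt 2 + eps) >= 2 * eps) by nra.
  assert (K : forall P Q, norm3 P <= 1 -> norm3 Q <= 1 ->
     dot3 (Xsph thb phb) (cross P Q) > 2 * eps * (sqrt 2 + eps) ->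
     dot3 (Xsph th ph) (cross P Q) > 0).
  { intros P Q NP NQ S.
    assert (Hw : dot3 (cross P Q) (cross P Q) <= 1).
    { rewrite lagrange. pose proof (norm_le P NP). pose proof (norm_le Q NQ).
      pose proof (dot_nonneg P). pose proof (dot_nonneg Q). nra. }
    pose proof (Xdiff th ph thb phb _ Hw). revert H; clear -Hth Hph S Hb He; unfold Rabs in *; repeat destruct Rcase_abs; lra. }
  pose proof (K _ _ N1 N2 S12). pose proof (K _ _ N2 N3 S23). pose proof (K _ _ N3 N1 S31).
  unfold Xsph in *. apply alg; auto.
  pose proof (sin2_cos2 th) as Ct. pose proof (sin2_cos2 ph) as Cp. unfold Rsqr in *.
  transitivity (sin ph * sin ph * (sin th * sin th + cos th * cos th) + cos ph * cos ph); [ring|].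
  rewrite Ct. lra.
Qed.
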